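(* Let $n_1,n_2,m_1,m_2$ be integers with $n_i\ge2$ and $0\le m_i\le n_i(n_i-1)$ for $i\in\{1,2\}$, and let $q_i$ and $r_i$ be the quotient and remainder of $m_i$ divided by $n_i$. If $n_1\le n_2$, $q_1\le q_2$ and $n_1-r_1\ge n_2-r_2$, then $\mathbb G(n_1,m_1)$ is a subgraph of $\mathbb G(n_2,m_2)$ (with vertex set $\{1,\dots,n_1\}\subseteq\{1,\dots,n_2\}$ and every arc of $\mathbb G(n_1,m_1)$ an arc of $\mathbb G(n_2,m_2)$).
   Context: For integers $n\ge2$ and $0\le m\le n(n-1)$, $\mathbb G(n,m)$ is the simple directed graph on vertex set $\{1,\dots,n\}$ whose arc set is $\{(\lceil \frac{i}{n-1}\rceil,\ n-((i-1)\bmod n)) : i=1,\dots,m\}$, where an arc $(j,k)$ goes from $j$ to $k$ and $a\bmod b\in\{0,\dots,b-1\}$; these $m$ pairs are pairwise distinct pairs of distinct vertices. *)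

(* Defs.v *)
From mathcomp Require Import all_boot.
Set Implicit Arguments. Unset Strict Implicit. Unset Printing Implicit Defensive.

Definition ceil_div (a b : nat) : nat := (a + b - 1) %/ b.

Definition Garc (n m j k : nat) : Prop :=
  exists i : nat, [/\ 1 <= i, i <= m,
                      j = ceil_div i (n - 1) & k = n - ((i - 1) %% n)].

Definition Gsubgraph (n1 m1 n2 m2 : nat) : Prop :=
  n1 <= n2 /\ (forall j k, Garc n1 m1 j k -> Garc n2 m2 j k).

(* Main.v *)
Require Import Defs.
From mathcomp Require Import all_boot.
From mathcomp Require Import zify.

Lemma ceil_key (n q r : nat) : 2 <= n -> q <= n - 2 -> r < n ->
  ceil_div (q * n + r + 1) (n - 1) = q + 1 + (n - 1 <= q + r).
Proof.
move=> hn hq hr; rewrite /ceil_div.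
have d0 : 0 < n - 1 by lia.
have -> : q * n + r + 1 + (n - 1) - 1 = (q + 1) * (n - 1) + (q + r).
  case: n hn hq hr d0 => // n' _ _ _ _; rewrite subn1 /= mulnS mulnDl mul1n; lia.
rewrite divnMDl //.
case: (leqP (n - 1) (q + r)) => h.
- have -> : q + r = 1 * (n - 1) + (q + r - (n - 1)) by lia.
  rewrite divnMDl // divn_small; lia.
- rewrite divn_small //; lia.
Qed.

Theorem corollary2 (n1 n2 m1 m2 : nat) :
  2 <= n1 -> 2 <= n2 ->
  m1 <= n1 * (n1 - 1) -> m2 <= n2 * (n2 - 1) ->
  n1 <= n2 -> m1 %/ n1 <= m2 %/ n2 ->
  n2 - m2 %% n2 <= n1 - m1 %% n1 ->
  Gsubgraph n1 m1 n2 m2.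
Proof.
move=> h1 h2 hm1 hm2 hn hq hr; split => // j k [i [hi1 him hj hk]].
have p1 : 0 < n1 by lia.
have p2 : 0 < n2 by lia.
set a := i - 1.
set q := a %/ n1; set r := a %% n1.
have ea : a = q * n1 + r by rewrite /q /r -divn_eq.
have rlt : r < n1 by rewrite /r ltn_mod.
have qlt : q < n1 - 1 by rewrite /q ltn_divLR //; lia.
have hqQ : q <= m1 %/ n1 by apply: leq_div2r; lia.
have eM1 := divn_eq m1 n1.
have eM2 := divn_eq m2 n2.
have R1lt : m1 %% n1 < n1 by rewrite ltn_mod.
have R2lt : m2 %% n2 < n2 by rewrite ltn_mod.
set Q1 := m1 %/ n1 in hqQ hq eM1; set R1 := m1 %% n1 in R1lt hr eM1.
set Q2 := m2 %/ n2 in hq eM2; set R2 := m2 %% n2 in R2lt hr eM2.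
exists (q * n2 + (r + (n2 - n1)) + 1); split.
- lia.
- case: (ltnP q Q2) => hqQ2.
  + have : (q + 1) * n2 <= Q2 * n2 by rewrite leq_mul2r; apply/orP; right; lia.
    rewrite mulnDl mul1n; lia.
  + have eq1 : q = Q1 by lia.
    have : r < R1 by rewrite eq1 in ea; lia.
    have : q * n2 = Q2 * n2 by congr (_ * _); lia.
    lia.
- have ei : i = q * n1 + r + 1 by lia.
  rewrite hj ei !ceil_key //; lia.
- rewrite hk addnK modnMDl (modn_small (m := r + _)); last lia.
  rewrite -/a ea modnMDl modn_small //; lia.
Qed.
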